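(* Let $M=(m_i)$, $N=(n_i)$ satisfy conditions (i) and (ii) below and let $p_k=5n_1+\sum_{1\le i<k}s_in_{2i}$ for $k\ge1$. Let $k\ge1$, $a\in\mathbb N\cup\{0\}$ and let $a_1,\dots,a_{k-1}$ be non-negative integers such that $m_1^{a}\prod_{1\le i<k}m_{2i}^{a_i}<m_{2k}$. Then $an_1+\sum_{1\le i<k}a_in_{2i}<p_k$.
   Context: $M=(m_i)$, $N=(n_i)$ are increasing sequences of positive integers such that (i) $m_1>3$, $m_2=m_1^5$, $m_{2j+1}=m_{2j}^5$ for $j\ge1$, and there is an increasing sequence $(s_i)$ of positive integers with $m_{2j}=\prod_{i=1}^{j-1}m_{2i}^{s_i}$ for $j\ge2$; (ii) defining for $j\ge2$ $f_j=\max\{\rho n_1+\sum_{1\le i<j}\rho_in_{2i}:\ \rho,\rho_i\in\mathbb N\cup\{0\},\ m_1^{\rho}\prod_{1\le i<j}m_{2i}^{\rho_i}<m_{2j}\}$, one has $4f_j<n_{2j}$ for all $j\ge2$, and $5n_1<n_2$. *)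

(* Defs.v *)
(* Sequences are nat -> nat, indexed from 1 (index 0 unused). *)
From mathcomp Require Import all_boot.
Set Implicit Arguments. Unset Strict Implicit. Unset Printing Implicit Defensive.

Definition feasible (m : nat -> nat) (j r : nat) (rs : nat -> nat) : bool :=
  m 1 ^ r * \prod_(1 <= i < j) m (2 * i) ^ rs i < m (2 * j).

Definition wsum (n : nat -> nat) (j r : nat) (rs : nat -> nat) : nat :=
  r * n 1 + \sum_(1 <= i < j) rs i * n (2 * i).

Definition ffseq (j B : nat) (t : {ffun 'I_j -> 'I_B}) : nat -> nat :=
  fun i => oapp (fun k : 'I_j => nat_of_ord (t k)) 0 (insub i).

(* f_j = max { r n_1 + sum rho_i n_{2i} : m_1^r prod m_{2i}^{rho_i} < m_{2j} }.
   The exponents are searched in the box [0, m_{2j}), which contains every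
   feasible exponent vector since the bases are >= 2 (so b^e > e). *)
Definition fmax (m n : nat -> nat) (j : nat) : nat :=
  \max_(r < m (2 * j))
    \max_(t : {ffun 'I_j -> 'I_(m (2 * j))} | feasible m j r (ffseq t))
      wsum n j r (ffseq t).

Definition pk (n s : nat -> nat) (k : nat) : nat :=
  5 * n 1 + \sum_(1 <= i < k) s i * n (2 * i).

Definition cond_i (m s : nat -> nat) : Prop :=
  [/\ (forall i, 1 <= i -> 0 < m i /\ m i < m i.+1),
      (forall i, 1 <= i -> 0 < s i /\ s i < s i.+1),
      3 < m 1 /\ m 2 = m 1 ^ 5,
      (forall j, 1 <= j -> m (2 * j).+1 = m (2 * j) ^ 5) &
      (forall j, 2 <= j -> m (2 * j) = \prod_(1 <= i < j) m (2 * i) ^ s i)].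

Definition cond_ii (m n : nat -> nat) : Prop :=
  [/\ (forall i, 1 <= i -> 0 < n i /\ n i < n i.+1),
      (forall j, 2 <= j -> 4 * fmax m n j < n (2 * j)) &
      5 * n 1 < n 2].

(* Main.v *)
Require Import Defs.
From mathcomp Require Import all_boot.
From Stdlib Require Import Lia.
Set Implicit Arguments. Unset Strict Implicit. Unset Printing Implicit Defensive.

Lemma m_ge4 m s : cond_i m s -> forall i, 1 <= i -> 4 <= m i.
Proof.
case=> Hm _ [H3 _] _ _.
elim=> [//|i IH] _.
case: i IH => [|i] IH; first by [].
apply: leq_trans (IH isT) _; apply: ltnW; exact: (Hm i.+1 isT).2.
Qed.

Lemma m2pos m s i : cond_i m s -> 1 <= i -> 0 < m (2 * i).
Proof.
move=> H Hi; apply: leq_trans (m_ge4 H _) => //.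
by rewrite muln_gt0.
Qed.

Lemma m2gt1 m s i : cond_i m s -> 1 <= i -> 1 < m (2 * i).
Proof.
move=> H Hi; apply: leq_trans (m_ge4 H _) => //.
by rewrite muln_gt0.
Qed.

Lemma prod_pos m s j e : cond_i m s -> 0 < \prod_(1 <= i < j) m (2 * i) ^ e i.
Proof.
move=> H; rewrite big_nat_cond; apply: prodn_cond_gt0 => i /andP[/andP[Hi _] _].
by rewrite expn_gt0 (m2pos H Hi).
Qed.

Lemma fac_le m s j e i : cond_i m s -> 1 <= i < j ->
  m (2 * i) ^ e i <= \prod_(1 <= i < j) m (2 * i) ^ e i.
Proof.
move=> H /andP[H1 H2].
apply: dvdn_leq; first exact: prod_pos H.
rewrite (big_cat_nat _ (n := i)) //=; last exact: ltnW.
rewrite [X in _ %| _ * X]big_ltn //.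
by apply: dvdn_mull; apply: dvdn_mulr.
Qed.

Lemma feas_box m s j r rs : cond_i m s -> feasible m j r rs ->
  r < m (2 * j) /\ (forall i, 1 <= i < j -> rs i < m (2 * j)).
Proof.
move=> H; rewrite /feasible => Hf.
have H1 : 1 < m 1 by apply: leq_trans (m_ge4 H (isT : 1 <= 1)).
have Hp := prod_pos j rs H.
split.
- apply: leq_ltn_trans _ Hf.
  exact: leq_trans (ltnW (ltn_expl r H1)) (leq_pmulr _ Hp).
- move=> i Hi; apply: leq_ltn_trans _ Hf.
  have /andP[Hi1 _] := Hi.
  apply: leq_trans (ltnW (ltn_expl (rs i) (m2gt1 H Hi1))) _.
  apply: leq_trans (fac_le rs H Hi) _.
  apply: leq_pmull; by rewrite expn_gt0 ltnW.
Qed.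

Lemma fmax_ge m n s j r rs : cond_i m s -> feasible m j r rs ->
  wsum n j r rs <= fmax m n j.
Proof.
move=> H Hf; have [Hr Hrs] := feas_box H Hf.
pose t : {ffun 'I_j -> 'I_(m (2*j))} := [ffun i : 'I_j => insubd (Ordinal Hr) (rs (nat_of_ord i))].
have Ht : forall i, 1 <= i < j -> ffseq t i = rs i.
  move=> i Hi; have /andP[_ Hij] := Hi.
  by rewrite /ffseq insubT /= ffunE val_insubd (Hrs i Hi).
have Ew : wsum n j r rs = wsum n j r (ffseq t).
  by rewrite /wsum; congr (_ + _); apply: eq_big_nat => i Hi; rewrite Ht.
have Ef : feasible m j r (ffseq t).
  move: Hf; rewrite /feasible.
  suff -> : \prod_(1 <= i < j) m (2 * i) ^ ffseq t i =
            \prod_(1 <= i < j) m (2 * i) ^ rs i by [].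
  by apply: eq_big_nat => i Hi; rewrite Ht.
rewrite Ew /fmax.
apply: leq_trans _ (leq_bigmax (Ordinal Hr)) => /=.
exact: (leq_bigmax_cond t Ef).
Qed.

Lemma ones_feas m s j : cond_i m s -> 1 <= j -> feasible m j 1 (fun _ => 1).
Proof.
move=> H; have [Hm _ _ H5 _] := H.
rewrite /feasible expn1; elim: j => [//|j IH] _.
case: j IH => [|j] IH.
  by rewrite big_geq // muln1; exact: (Hm 1 isT).2.
rewrite big_nat_recr //= mulnA.
set x := m (2 * j.+1).
have Hx : 0 < x by exact: m2pos H _.
apply: (@leq_trans (x * x).+1).
  by rewrite ltnS leq_pmul2r // ltnW //; apply: IH.
have -> : 2 * j.+2 = (2 * j.+1).+2 by rewrite mulnS.
apply: leq_trans _ (Hm (2 * j.+1).+1 isT).2.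
have Hx1 : 1 < x by exact: m2gt1 H _.
rewrite H5 // -/x ltnS -[x * x]/(x ^ 2); exact: leq_pexp2l.
Qed.

Lemma div_feas m s j T a as_ : cond_i m s -> 0 < T ->
  m 1 ^ a * \prod_(1 <= i < j) m (2 * i) ^ as_ i < m (2 * j) ^ T ->
  feasible m j (a %/ T) (fun i => as_ i %/ T).
Proof.
move=> H HT Hf; rewrite /feasible -(ltn_exp2r _ _ HT).
apply: leq_ltn_trans _ Hf.
rewrite expnMn -expnM.
rewrite (big_morph (fun x => x ^ T) (fun x y => expnMn x y T) (exp1n T)).
have H1 : 0 < m 1 by apply: leq_trans (m_ge4 H (isT : 1 <= 1)).
apply: leq_mul; first by apply: leq_pexp2l => //; exact: leq_divM.
rewrite big_nat_cond [X in _ <= X]big_nat_cond.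
apply: leq_prod => i /andP[/andP[Hi _] _].
rewrite -expnM; apply: leq_pexp2l; [exact: m2pos H Hi | exact: leq_divM].
Qed.

Lemma term_split T e x : 0 < T -> e * x <= T * (e %/ T * x) + (T - 1) * x.
Proof.
move=> HT; rewrite {1}(divn_eq e T) mulnDl mulnA (mulnC T).
apply: leq_add => //; apply: leq_mul => //.
by rewrite subn1 -ltnS prednK //; exact: ltn_pmod.
Qed.

Lemma wsum_split n j T a as_ : 0 < T ->
  wsum n j a as_ <= T * wsum n j (a %/ T) (fun i => as_ i %/ T)
                    + (T - 1) * wsum n j 1 (fun _ => 1).
Proof.
move=> HT; rewrite /wsum mul1n mulnDr (mulnDr (T - 1)) addnACA; apply: leq_add.
  exact: term_split.
rewrite !big_distrr -big_split /=; apply: leq_sum => i _; rewrite mul1n.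
exact: term_split.
Qed.

Theorem mainTheorem6 (m n s : nat -> nat) :
  cond_i m s -> cond_ii m n ->
  forall (k a : nat) (as_ : nat -> nat),
    1 <= k -> feasible m k a as_ -> wsum n k a as_ < pk n s k.
Proof.
move=> Hi Hii k a as_ Hk Hf.
have [Hm Hs [H3 Hm2] H5 Hprod] := Hi.
have [Hn Hfm Hn2] := Hii.
have Hn1 : 0 < n 1 by exact: (Hn 1 isT).1.
have Hm1 : 1 < m 1 by apply: leq_trans H3.
elim: k Hk a as_ Hf => [//|k IH] _ a as_ Hf.
case: k IH Hf => [|k] IH Hf.
  have : m 1 ^ a < m 1 ^ 5.
    by rewrite -Hm2; move: Hf; rewrite /feasible big_geq // muln1.
  rewrite ltn_exp2l // => Ha.
  by rewrite /wsum /pk !big_geq // !addn0 ltn_pmul2r.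
case: k IH Hf => [|k] IH Hf.
  move: Hf; rewrite /feasible /wsum /pk !big_nat1 (Hprod 2 isT) big_nat1 => Hf.
  set x := m (2 * 1) in Hf *.
  have Hx1 : 1 < x by exact: m2gt1 Hi _.
  have Hb : as_ 1 < s 1.
    rewrite -(ltn_exp2l _ _ Hx1); apply: leq_ltn_trans _ Hf.
    by apply: leq_pmull; rewrite expn_gt0 ltnW.
  set b := as_ 1 in Hb *.
  have HS : s 1 = b + (s 1 - b) by rewrite subnKC // ltnW.
  set c := s 1 - b in HS.
  have Hc : 0 < c by rewrite subn_gt0.
  move: Hf; rewrite HS expnD (mulnC (m 1 ^ a)) ltn_pmul2l; last by rewrite expn_gt0 ltnW.
  have -> : x = m 1 ^ 5 by rewrite -Hm2.
  rewrite -expnM ltn_exp2l // => Ha.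
  have Han : a * n 1 < c * n (2 * 1).
    apply: leq_trans (_ : (5 * c) * n 1 <= _).
      by rewrite ltn_pmul2r // mulnC.
    rewrite (mulnC 5) -mulnA leq_mul2l; apply/orP; right; exact: ltnW.
  rewrite mulnDl addnCA [a * n 1 + _]addnC ltn_add2l.
  exact: ltn_addl.
set j := k.+2.
have Hj : 2 <= j by [].
have Hx1 : 1 < m (2 * j) by exact: m2gt1 Hi _.
have Hx0 : 0 < m (2 * j) by exact: ltnW.
move: Hf; rewrite /feasible (@big_nat_recr _ _ _ j 1) //= mulnA.
rewrite (Hprod j.+1 isT) (@big_nat_recr _ _ _ j 1) //= -(Hprod j Hj) -expnS.
set x := m (2 * j).
set R := m 1 ^ a * _.
move=> Hf.
have HR : 0 < R by rewrite muln_gt0 expn_gt0 (ltnW Hm1) (prod_pos _ _ Hi).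
have Hb : as_ j <= s j.
  rewrite -ltnS -(ltn_exp2l _ _ Hx1); apply: leq_ltn_trans _ Hf.
  exact: leq_pmull.
set b := as_ j in Hb Hf *.
have HS : s j = b + (s j - b) by rewrite subnKC.
set c := s j - b in HS.
move: Hf; rewrite HS -addnS expnD mulnC ltn_pmul2l; last by rewrite expn_gt0 Hx0.
move=> Hf.
rewrite /wsum /pk (@big_nat_recr _ _ _ j 1) //= (@big_nat_recr _ _ _ j 1 (fun i => s i * n (2 * i))) //= !addnA.
rewrite -/(wsum n j a as_) -/(pk n s j) HS mulnDl addnA.
rewrite -/b -addnA [b * _ + _]addnC addnA ltn_add2r.
clear HS; case: c Hf => [|c] Hf.
  by rewrite addn0; apply: IH; rewrite // /feasible expn1.
try rewrite ltn_addl //.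
set f := fmax m n j.
have Hf4 : 4 * f < n (2 * j) by apply: Hfm.
apply: (@leq_ltn_trans ((c.+2) * f + (c.+1) * f)).
  apply: leq_trans (wsum_split n j a as_ (isT : 0 < c.+2)) _.
  rewrite subn1 /=; apply: leq_add; rewrite leq_mul2l; apply/orP; right.
    exact: fmax_ge Hi (div_feas Hi _ Hf).
  exact: fmax_ge Hi (ones_feas Hi _).
apply: (@leq_ltn_trans (c.+1 * (4 * f))).
  rewrite -mulnDl mulnA leq_mul2r; apply/orP; right.
  apply/leP; rewrite -!plusE -!multE; lia.
by rewrite ltn_pmul2l.
Qed.
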